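(* Let ${\bf r}=(r_0,r_1,\dots)$ be a finitely supported sequence of nonnegative integers with $n=\sum_{d\ge1}r_d\ge1$ and $\ell=-\sum_{d\ge0}(d-1)r_d\ge1$, let $k\ge0$ be an integer, and let ${\bf S}\in V_{\bf r}$. Then $$|\mathcal{CF}_{{\bf r},k,{\bf S}}|=\ell\,1^{r_1}2^{r_2}3^{r_3}\cdots\prod_{i=1}^{n-1}\big(r_0+i(1+k)\big).$$
   Context: A plane tree is an unlabelled rooted tree in which the children of every vertex are linearly ordered; a plane forest is a finite linearly ordered sequence of plane trees. For vertices $u,v$ in a tree, $v$ is a descendant of $u$ if $u$ lies on the path from the root to $v$ (so $u$ is a descendant of itself). The degree $d_v$ is the number of children of $v$; $v$ is internal if $d_v\ge1$. $I(F)$ is the set of internal vertices of $F$. A plane forest has type ${\bf r}$ if it has exactly $r_i$ vertices of degree $i$ for all $i\ge0$. A labelled forest is a plane forest $F$ together with a bijection (labelling) $I(F)\to[n]$. An internal vertex $v$ of a labelled forest is proper if no internal descendant of $v$ has a smaller label than $v$, and improper otherwise. Fix colors $c_1,c_2,\dots$ and distinct special colors $c_1',c_2',\dots$. A proper $k$-coloring of a labelled forest assigns to each internal vertex $v$ a color, taken from $\{c_1,\dots,c_{d_v}\}$ if $v$ is proper and from $\{c_1,\dots,c_{d_v}\}\cup\{c_1',\dots,c_k'\}$ if $v$ is improper. A $k$-colored labelled forest is a labelled forest together with a proper $k$-coloring; $\mathcal{CF}_{{\bf r},k}$ is the set of $k$-colored labelled forests whose underlying plane forest has type ${\bf r}$.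 $V_{\bf r}$ is the set of sequences ${\bf S}=(S_1,S_2,\dots)$ of pairwise disjoint subsets of $[n]$ with union $[n]$ and $|S_i|=r_i$ for all $i\ge1$. For ${\bf S}\in V_{\bf r}$, $\mathcal{CF}_{{\bf r},k,{\bf S}}$ is the set of forests in $\mathcal{CF}_{{\bf r},k}$ in which every internal vertex $v$ has its label in $S_{d_v}$. *)

(* Defs.v *)
From mathcomp Require Import all_boot all_algebra.
Set Implicit Arguments. Unset Strict Implicit. Unset Printing Implicit Defensive.
Import GRing.Theory Num.Theory.

(* Colors: [Ord j] is c_j, [Spec j] is the special color c'_j (j >= 1). *)
Inductive color := Ord of nat | Spec of nat.

(* For leaves the decoration is meaningless and is
   forced to the canonical value (label 0, color Ord 0) by [wf_leaves], so
   that decorated forests correspond bijectively to colored labelled forests. *)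
Inductive dtree := DNode of nat & color & seq dtree.

Definition dlabel (t : dtree) := let: DNode l _ _ := t in l.
Definition dcolor (t : dtree) := let: DNode _ c _ := t in c.
Definition dchildren (t : dtree) := let: DNode _ _ ch := t in ch.
Definition ddeg (t : dtree) := size (dchildren t).
Definition internal (t : dtree) := 0 < ddeg t.

(* All vertices of a tree (each vertex represented by the subtree it roots),
   listed with multiplicity; the first one is the root. *)
Fixpoint subtrees (t : dtree) : seq dtree :=
  let: DNode _ _ ch := t in t :: flatten (map subtrees ch).

Definition fvertices (F : seq dtree) : seq dtree := flatten (map subtrees F).

Definition proper (v : dtree) : bool :=
  all (fun u => dlabel v <= dlabel u) (filter internal (subtrees v)).

Definition rr (r : seq nat) (i : nat) : nat := nth 0 r i.

Definition n_of (r : seq nat) : nat := \sum_(1 <= d < size r) rr r d.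

Definition ell_of (r : seq nat) : int :=
  (- \sum_(0 <= d < size r) ((d%:Z - 1) * (rr r d)%:Z))%R.

(* S = (S_1, S_2, ...) in V_r ; S 0 is ignored *)
Definition inV (r : seq nat) (S : nat -> pred nat) : Prop :=
  [/\ (forall i j x, 1 <= i -> 1 <= j -> i != j -> S i x -> S j x -> False),
      (forall x, (exists2 i, 1 <= i & S i x) <-> (1 <= x <= n_of r)) &
      (forall i, 1 <= i -> count (S i) (iota 1 (n_of r)) = rr r i)].

Definition color_ok (k : nat) (v : dtree) : bool :=
  match dcolor v with
  | Ord j => (1 <= j <= ddeg v)
  | Spec j => (1 <= j <= k) && ~~ proper v
  end.

Definition CF (r : seq nat) (k : nat) (S : nat -> pred nat) (F : seq dtree) : Prop :=
  let V := fvertices F in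
  [/\
      all (fun v => internal v || ((dlabel v == 0) && (if dcolor v is Ord 0 then true else false)))
          [seq v <- V | ~~ internal v] ,
      (forall i, count (fun v => ddeg v == i) V = rr r i),
      perm_eq (map dlabel (filter internal V)) (iota 1 (n_of r)),
      all (color_ok k) (filter internal V) &
      all (fun v => S (ddeg v) (dlabel v)) (filter internal V)].

Definition has_card (T : Type) (P : T -> Prop) (N : nat) : Prop :=
  exists e : 'I_N -> T, injective e /\ (forall x, P x <-> exists i, e i = x).

(* Main.v *)
Require Import Defs.
From HB Require Import structures.
From mathcomp Require Import all_boot all_algebra.
From mathcomp Require Import zify ring.
Import GRing.Theory Num.Theory.
Set Implicit Arguments. Unset Strict Implicit. Unset Printing Implicit Defensive.

Definition col2s (c : color) : nat + nat := match c with Ord j => inl j | Spec j => inr j end.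
Definition s2col (s : nat + nat) : color := match s with inl j => Ord j | inr j => Spec j end.
Lemma col2sK : cancel col2s s2col. Proof. by case. Qed.
HB.instance Definition _ := Equality.copy color (can_type col2sK).

Fixpoint dtree_rect2 (P : dtree -> Type) (Q : seq dtree -> Type)
  (hn : forall l c ch, Q ch -> P (DNode l c ch)) (h0 : Q [::])
  (hc : forall t s, P t -> Q s -> Q (t :: s)) (t : dtree) : P t :=
  match t with DNode l c ch => hn l c ch
    ((fix aux (s : seq dtree) : Q s := match s with [::] => h0
       | t :: s' => hc t s' (dtree_rect2 hn h0 hc t) (aux s') end) ch) end.

Fixpoint enc (t : dtree) : GenTree.tree (nat * color) :=
  let: DNode l c ch := t in GenTree.Node 0 (GenTree.Leaf (l, c) :: map enc ch).
Fixpoint dec (t : GenTree.tree (nat * color)) : option dtree :=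
  match t with
  | GenTree.Node _ (GenTree.Leaf (l, c) :: ts) => Some (DNode l c (pmap dec ts))
  | _ => None end.
Lemma encK : pcancel enc dec.
Proof.
move=> t; apply: (@dtree_rect2 (fun t => dec (enc t) = Some t)
        (fun s => pmap dec (map enc s) = s)) => //=.
- by move=> l c ch ->.
- by move=> t' s -> ->.
Qed.
HB.instance Definition _ := Equality.copy dtree (pcan_type encK).

Lemma fv_cons t F : fvertices (t :: F) = subtrees t ++ fvertices F.
Proof. by []. Qed.
Lemma fv_cat F G : fvertices (F ++ G) = fvertices F ++ fvertices G.
Proof. by rewrite /fvertices map_cat flatten_cat. Qed.
Lemma fv1 t : fvertices [:: t] = subtrees t.
Proof. by rewrite fv_cons cats0. Qed.

Section Count.
Variables (k : nat) (w : nat -> nat).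

Definition leaf0 := DNode 0 (Ord 0) [::].
Definition okv (v : dtree) : bool :=
  if internal v then (ddeg v == w (dlabel v)) && color_ok k v
  else (dlabel v == 0) && (if dcolor v is Ord 0 then true else false).
Definition labs (F : seq dtree) := map dlabel (filter internal (fvertices F)).
Definition Ap (L : seq nat) (l : nat) (F : seq dtree) :=
  [&& all okv (fvertices F), perm_eq (labs F) L & size F == l].
Definition Jp L l m j F := Ap L l F && (m \in labs (take j F)).
Definition enum_of (P : pred (seq dtree)) s := uniq s /\ forall x, P x = (x \in s).

Lemma labs_cat F G : labs (F ++ G) = labs F ++ labs G.
Proof. by rewrite /labs fv_cat filter_cat map_cat. Qed.
Lemma labs_cons t F : labs (t :: F) = labs [:: t] ++ labs F.
Proof. by rewrite -labs_cat. Qed.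
Lemma labs_node l c ch :
  labs [:: DNode l c ch] = if ch is [::] then [::] else l :: labs ch.
Proof. by rewrite /labs fv1 /=; case: ch. Qed.
Lemma memlabs_has m F : (m \in labs F) = has (fun t => m \in labs [:: t]) F.
Proof. by elim: F => [|t F IH] //; rewrite labs_cons mem_cat IH. Qed.

Lemma fv_build l c d F :
  fvertices (DNode l c (take d F) :: drop d F) = DNode l c (take d F) :: fvertices F.
Proof. by rewrite fv_cons /= -[flatten _]/(fvertices _) -fv_cat cat_take_drop. Qed.

Lemma proper_node l c ch : Defs.proper (DNode l c ch) = all (fun x => l <= x) (labs ch).
Proof.
rewrite /Defs.proper /labs all_map /=; case: ifP => _ //=; by rewrite leqnn.
Qed.

Lemma perm_fv_rot n F : perm_eq (fvertices (rot n F)) (fvertices F).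
Proof.
rewrite /rot fv_cat perm_catC -fv_cat cat_take_drop perm_refl //.
Qed.
Lemma Ap_rot L l n F : Ap L l (rot n F) = Ap L l F.
Proof.
rewrite /Ap size_rot (perm_all _ (perm_fv_rot n F)).
have P : perm_eq (labs (rot n F)) (labs F).
  by rewrite /labs; apply: perm_map; apply: perm_filter; apply: perm_fv_rot.
by rewrite (permPl P).
Qed.
Lemma Ap_rotr L l n F : Ap L l (rotr n F) = Ap L l F.
Proof. by rewrite /rotr Ap_rot. Qed.

Lemma Ap_nil l F : Ap [::] l F = (F == nseq l leaf0).
Proof.
apply/idP/eqP.
- case/and3P=> ha hp /eqP hs.
  have hl : labs F = [::] by apply/nilP; rewrite /nilp (perm_size hp).
  rewrite -hs; apply/all_pred1P/allP => t tF.
  have tv : t \in fvertices F.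
    by apply/flattenP; exists (subtrees t); [apply: map_f | case: t {tF} => ? ? ? /=; rewrite inE eqxx].
  have ti : ~~ internal t.
    apply/negP=> it; move: hl; rewrite /labs.
    have : dlabel t \in map dlabel (filter internal (fvertices F)).
      by apply: map_f; rewrite mem_filter it tv.
    by move=> + E; rewrite E.
  move: (allP ha t tv); rewrite /okv (negbTE ti).
  case: t ti {tF tv} => l0 c ch; rewrite /internal /ddeg /=.
  case: ch => // _; case/andP=> /eqP -> /=; case: c => // -[|//] _.
  by rewrite /= eqxx.
- move=> ->; rewrite /Ap size_nseq eqxx andbT.
  have -> : fvertices (nseq l leaf0) = nseq l leaf0.
    by elim: l => //= l IH; rewrite fv_cons IH.
  apply/andP; split; first by rewrite all_nseq orbT.
  have -> : labs (nseq l leaf0) = [::].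
    rewrite /labs; elim: l => //= l IH; by rewrite fv_cons.
  by [].
Qed.


Section Rot.
Variables (L : seq nat) (l m : nat).
Hypothesis uL : uniq L.
Let hasm := fun t => m \in labs [:: t].

Lemma Jp1_split F : Jp L l m 1 F ->
  exists t rest, [/\ F = t :: rest, hasm t, ~~ has hasm rest & size F = l].
Proof.
case: F => [|t rest]; first by rewrite /Jp andbF.
case/andP=> /and3P [_ hp /eqP hs]; rewrite /= take0 => ht.
exists t, rest; split=> //.
apply/hasP=> -[x xr hx].
have : uniq (labs (t :: rest)) by rewrite (perm_uniq hp).
rewrite labs_cons cat_uniq => /and3P [_ /hasPn H _].
have : m \in labs rest by rewrite memlabs_has; apply/hasP; exists x.
by move/H; rewrite ht.
Qed.

Lemma find_rotr F p : Jp L l m 1 F -> p < l -> find hasm (rotr p F) = p.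
Proof.
case/Jp1_split=> t [rest [-> ht hr hs]] pl.
rewrite /rotr hs /rot find_cat.
have e : l - p = (l - p).-1.+1 by rewrite prednK // subn_gt0.
have -> : has hasm (drop (l - p) (t :: rest)) = false.
  rewrite e /=; apply/negbTE/hasPn=> x /mem_drop xr.
  by move/hasPn: hr; apply.
have hs' : (size rest).+1 = l := hs.
by rewrite size_drop /= hs' e /= ht addn0 -e subKn // ltnW.
Qed.

Lemma rot_step j s0 : j <= l -> enum_of (Jp L l m 1) s0 ->
  enum_of (Jp L l m j) [seq rotr p F | p <- iota 0 j, F <- s0].
Proof.
move=> jl [us0 hs0]; split.
  apply: allpairs_uniq; [exact: iota_uniq | exact: us0 | ].
  move=> [p F] [p' F'] /allpairsP [[a b] [ai bi /= [-> ->]]]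
    /allpairsP [[a' b'] [ai' bi' /= [-> ->]]] /= E.
  move: ai ai' bi bi' => /=; rewrite !mem_iota => ai ai' bi bi'.
  have pa : a < l by lia.
  have pa' : a' < l by lia.
  have Ea : a = a'.
    by rewrite -(find_rotr (_ : Jp L l m 1 b) pa) ?hs0 // E find_rotr // hs0.
  by move: E; rewrite Ea => /rotr_inj ->.
move=> G; apply/idP/allpairsP.
- case/andP=> hA hm.
  have hG : has hasm G.
    rewrite memlabs_has in hm; case/hasP: hm => x /mem_take xG hx.
    by apply/hasP; exists x.
  have qj : find hasm G < j by rewrite -has_take // -memlabs_has.
  have qs : find hasm G < size G by rewrite -has_find.
  exists (find hasm G, rot (find hasm G) G); split=> /=.
  + by rewrite mem_iota.
  + rewrite -hs0 /Jp Ap_rot hA /= /rot (drop_nth leaf0 qs) /= take0.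
    have := nth_find leaf0 hG; by rewrite /hasm.
  + by rewrite rotK.
- case=> -[p F] /= [pi Fi ->]; rewrite mem_iota in pi.
  have H1 : Jp L l m 1 F by rewrite hs0.
  have pl : p < l by lia.
  move: (H1) => /andP [hA _].
  rewrite /Jp Ap_rotr hA /= memlabs_has has_take.
    by rewrite find_rotr.
  case/Jp1_split: H1 => t [rest [E ht _ _]].
  by rewrite /rotr has_rot E /=; move: ht; rewrite /hasm => ->.
Qed.
End Rot.


Definition build (lam : nat) (c : color) (d : nat) (F : seq dtree) :=
  DNode lam c (take d F) :: drop d F.
Definition rootis (lam : nat) (F : seq dtree) :=
  if F is t :: _ then dlabel t == lam else false.

Definition fF (l : nat) (L : seq nat) :=
  (\prod_(x <- L) w x) * \prod_(1 <= i < size L) (l + \sum_(x <- L) (w x).-1 + i * k.+1).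
Definition rootin (Lam : seq nat) (F : seq dtree) :=
  if F is t :: _ then dlabel t \in Lam else false.

Lemma enum_ext (P P' : pred (seq dtree)) s :
  (forall x, P x = P' x) -> enum_of P s -> enum_of P' s.
Proof. by move=> E [u H]; split=> // x; rewrite -E. Qed.

Lemma sum_rem (F : nat -> nat) x (s : seq nat) : x \in s ->
  \sum_(y <- s) F y = F x + \sum_(y <- rem x s) F y.
Proof. by move=> xs; rewrite (perm_big _ (perm_to_rem xs)) big_cons. Qed.
Lemma prod_rem (F : nat -> nat) x (s : seq nat) : x \in s ->
  \prod_(y <- s) F y = F x * \prod_(y <- rem x s) F y.
Proof. by move=> xs; rewrite (perm_big _ (perm_to_rem xs)) big_cons. Qed.

Lemma sum_const_seq (s : seq nat) c : \sum_(x <- s) c = size s * c.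
Proof. by elim: s => [|a s IH]; rewrite ?big_nil ?big_cons ?IH //= mulSn. Qed.

Section Block.
Variables (L : seq nat) (l m : nat).
Hypotheses (uL : uniq L) (mL : m \in L) (mmin : {in L, forall x, m <= x})
  (wpos : {in L, forall x, 0 < w x}) (lpos : 0 < l).

Definition cols lam := [seq Ord i | i <- iota 1 (w lam)] ++
  (if lam == m then [::] else [seq Spec i | i <- iota 1 k]).
Definition Q lam F := Ap (rem lam L) (l + w lam - 1) F &&
  ((lam == m) || (m \in labs (take (w lam) F))).

Lemma labs_build lam c d F : 0 < d -> d <= size F ->
  labs (build lam c d F) = lam :: labs F.
Proof.
move=> d0 dF; rewrite /labs /build fv_build /= /internal /ddeg /= size_takel //.
by rewrite d0.
Qed.

Lemma labs_root lam c d F : 0 < d -> d <= size F ->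
  labs [:: DNode lam c (take d F)] = lam :: labs (take d F).
Proof.
move=> d0 dF; rewrite labs_node; case E: (take d F) => //.
by move: (size_takel dF); rewrite E /=; lia.
Qed.

Lemma char lam c F : lam \in L -> w lam <= size F ->
  Jp L l m 1 (build lam c (w lam) F) = (c \in cols lam) && Q lam F.
Proof.
move=> lL dF; have d0 := wpos lL.
rewrite /Jp /Q /Ap labs_build // fv_build.
rewrite (permPr (perm_to_rem lL)) perm_cons /build /= take0 labs_root //.
rewrite /okv /internal /ddeg /= size_takel //.
rewrite d0 eqxx /= size_drop.
have -> : ((size F - w lam).+1 == l) = (size F == l + w lam - 1).
  by apply/eqP/eqP; lia.
set T := labs (take (w lam) F).
case hB: (perm_eq (labs F) (rem lam L)); last by rewrite !andbF.
have TL : {subset T <= rem lam L}.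
  move=> x xT; rewrite -(perm_mem hB) -[F](cat_take_drop (w lam)) labs_cat mem_cat.
  by rewrite xT.
have Tm : forall x, x \in T -> m <= x.
  by move=> x /TL /mem_rem /mmin.
set A := all _ (fvertices F).
rewrite /color_ok /= /cols inE.
have [E | ne] := eqVneq lam m.
  subst m; clear TL.
  have pr : Defs.proper (DNode lam c (take (w lam) F)).
    by rewrite proper_node; apply/allP=> x /Tm.
  rewrite /ddeg /= size_takel // cats0 !andbT; move: pr; case: c => i pr /=.
    rewrite mem_map ?mem_iota; last by move=> ?? [].
    by rewrite andbA.
  rewrite pr andbF /=.
  have -> : (Spec i \in [seq Ord j | j <- iota 1 (w lam)]) = false.
    by apply/negbTE/mapP => -[j _].
  by [].
rewrite /= /ddeg /= size_takel //.
case mT: (m \in T); last by rewrite !andbF.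
have lm : m < lam.
  by rewrite ltn_neqAle (mmin lL) andbT eq_sym.
have npr : ~~ Defs.proper (DNode lam c (take (w lam) F)).
  rewrite proper_node; apply/negP => /allP /(_ m mT); lia.
rewrite !andbT mem_cat; move: npr; case: c => i npr.
  rewrite mem_map; last by move=> ?? [].
  have -> : (Ord i \in [seq Spec j | j <- iota 1 k]) = false.
    by apply/negbTE/mapP => -[j _].
  by rewrite orbF mem_iota add1n ltnS -andbA.
rewrite npr andbT.
have -> : (Spec i \in [seq Ord j | j <- iota 1 (w lam)]) = false.
  by apply/negbTE/mapP => -[j _].
rewrite mem_map ?mem_iota /=; last by move=> ?? [].
by rewrite add1n ltnS -!andbA.
Qed.

Lemma Q_size lam F : Q lam F -> w lam <= size F.
Proof. by case/andP=> /and3P [_ _ /eqP ->] _; lia. Qed.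

Lemma cols_uniq lam : uniq (cols lam).
Proof.
rewrite /cols cat_uniq map_inj_uniq ?iota_uniq //; last by move=> ?? [].
case: ifP => _ //=; rewrite map_inj_uniq ?iota_uniq ?andbT; last by move=> ?? [].
by apply/hasPn => x /mapP [j _ ->]; apply/mapP => -[j' _].
Qed.

Lemma block lam s' : lam \in L -> enum_of (Q lam) s' ->
  enum_of (fun F => Jp L l m 1 F && rootis lam F)
    [seq build lam c (w lam) F | c <- cols lam, F <- s'].
Proof.
move=> lL [us hs]; split.
  apply: allpairs_uniq; [exact: cols_uniq | exact: us | ].
  move=> [c F] [c' F'] _ _ /= [-> E1 E2].
  by rewrite -[F](cat_take_drop (w lam)) E1 E2 cat_take_drop.
move=> G; apply/idP/allpairsP.
- case/andP=> hJ; case: G hJ => [|[lam0 c ch] rest] //= hJ /eqP El.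
  subst lam0.
  have hJ' := hJ; case/andP: hJ' => /and3P [ha _ _].
  have hok := allP ha _ (mem_head _ _).
  rewrite /= take0 labs_node; case: ch ha hJ hok => [|t ch] //= ha hJ hok _.
  move: hok; rewrite /okv /internal /ddeg /= => /andP [/eqP hd _].
  have Eb : DNode lam c (t :: ch) :: rest = build lam c (w lam) ((t :: ch) ++ rest).
    by rewrite /build -hd take_size_cat // drop_size_cat.
  exists (c, (t :: ch) ++ rest); rewrite /= -Eb; split=> //.
  + move: hJ; rewrite Eb char //; first by case/andP.
    by rewrite size_cat -hd leq_addr.
  + move: hJ; rewrite Eb char //; first by case/andP=> _; rewrite hs.
    by rewrite size_cat -hd leq_addr.
- case=> -[c F] /= [ci Fi ->].
  rewrite char //; last by apply: Q_size; rewrite hs.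
  by rewrite ci hs Fi /= eqxx.
Qed.

Definition hh lam := if lam == m then
    (if rem m L == [::] then 1 else (l + w m - 1) * fF (l + w m - 1) (rem m L))
  else w lam * fF (l + w lam - 1) (rem lam L).

Lemma Jp_rootin F : Jp L l m 1 F -> rootin L F.
Proof.
case: F => [|t rest]; first by rewrite /Jp andbF.
case/andP=> /and3P [_ hp _] /=; rewrite take0.
case: t hp => lam c ch; rewrite labs_node; case: ch => // t' ch' hp _.
rewrite -(perm_mem hp) labs_cons mem_cat labs_node /=.
by rewrite inE eqxx.
Qed.

Lemma lam_step (Lam : seq nat) : uniq Lam -> {subset Lam <= L} ->
  (forall lam, lam \in L -> exists s', enum_of (Q lam) s' /\ size s' = hh lam) ->
  exists s, enum_of (fun F => Jp L l m 1 F && rootin Lam F) s /\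
    size s = \sum_(lam <- Lam) size (cols lam) * hh lam.
Proof.
move=> uLam sub H; elim: Lam uLam sub => [|lam Lam IH] /=.
  by move=> _ _; exists [::]; split; [split=> // F; case: F => [|? ?]; rewrite /= ?andbF | rewrite big_nil].
case/andP=> lnin uLam sub.
have [s1 [[u1 h1] e1]] := IH uLam (fun x xL => sub x (@mem_behead _ (lam :: Lam) x xL)).
have lL : lam \in L by apply: sub; rewrite inE eqxx.
have [s' [hs' es']] := H lam lL.
have [ub hb] := block lL hs'.
exists ([seq build lam c (w lam) F | c <- cols lam, F <- s'] ++ s1); split; last first.
  by rewrite size_cat size_allpairs es' e1 big_cons.
split.
  rewrite cat_uniq ub u1 andbT /=; apply/hasPn => F F1.
  apply/negP => Fb; move: F1 Fb; rewrite -h1 -hb.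
  case: F => [|t rest] /=; rewrite ?andbF // => /andP [_ h] /andP [_ /eqP E].
  by move: lnin; rewrite -E h.
move=> F; rewrite mem_cat -h1 -hb.
case: F => [|t rest] /=; rewrite ?andbF // inE.
by rewrite andb_orr.
Qed.

Lemma size_cols lam : size (cols lam) = w lam + (if lam == m then 0 else k).
Proof. by rewrite /cols; case: ifP => _; rewrite size_cat ?size_map ?size_iota /= ?addn0. Qed.

Lemma keyf n lam : size L = n.+1 -> lam \in L ->
  w lam * fF (l + w lam - 1) (rem lam L) =
  (\prod_(x <- L) w x) * \prod_(1 <= i < n) (l + \sum_(x <- L) (w x).-1 + i * k.+1).
Proof.
move=> sL lL; rewrite /fF size_rem // sL /=.
rewrite (prod_rem w lL) mulnA (sum_rem (fun x => (w x).-1) lL).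
have wl := wpos lL.
congr (_ * _); apply: eq_bigr => i _; congr (_ + _).
rewrite addnA; congr (_ + _); lia.
Qed.

Lemma sum_hh n : size L = n.+1 ->
  \sum_(lam <- L) size (cols lam) * hh lam = fF l L.
Proof.
move=> sL; rewrite (sum_rem (fun lam => size (cols lam) * hh lam) mL) size_cols eqxx /hh eqxx.
case: n sL => [|n] sL.
  have -> : rem m L = [::] by apply/nilP; rewrite /nilp size_rem // sL.
  rewrite eqxx big_nil /fF sL big_geq // muln1 addn0 addn0 muln1.
  by rewrite (prod_rem w mL) (_ : rem m L = [::]) ?big_nil ?muln1 //;
    apply/nilP; rewrite /nilp size_rem // sL.
have -> : (rem m L == [::]) = false.
  by apply/negbTE; rewrite -size_eq0 size_rem // sL.
rewrite addn0 mulnCA (keyf sL mL).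
set P := \prod_(1 <= i < n.+1) _.
set W := \prod_(x <- L) w x.
rewrite [X in _ + X](_ : _ = \sum_(lam <- rem m L) (w lam + k) * (W * P)); last first.
  rewrite big_seq_cond [RHS]big_seq_cond; apply: eq_bigr => lam /andP [lr _].
  have lL : lam \in L by apply: (mem_rem lr).
  have ne : (lam == m) = false.
    by apply/negbTE; move: lr; rewrite (mem_rem_uniq _ uL) inE => /andP [].
  by rewrite size_cols ne (keyf sL lL).
rewrite -big_distrl /= /fF sL big_nat_recr //= -/P -/W.
rewrite (sum_rem (fun x => (w x).-1) mL).
have hs : \sum_(x <- rem m L) (w x + k) = \sum_(x <- rem m L) (w x).-1 + n.+1 * k.+1.
  rewrite (_ : n.+1 * k.+1 = size (rem m L) * k.+1); last by rewrite size_rem // sL.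
  rewrite -sum_const_seq -big_split /=.
  rewrite big_seq_cond [in RHS]big_seq_cond; apply: eq_bigr => x /andP [xr _].
  have := wpos (mem_rem xr); lia.
rewrite hs; have wm := wpos mL.
set S := \sum_(_ <- _) _.
have -> : l + ((w m).-1 + S) + n.+1 * k.+1 = l + w m - 1 + (S + n.+1 * k.+1) by lia.
set a := l + w m - 1; ring.
Qed.

End Block.

Lemma exists_min (s : seq nat) : s != [::] -> exists m, m \in s /\ {in s, forall x, m <= x}.
Proof.
elim: s => // a s IH _; case: s IH => [|b s] IH.
  by exists a; split; [rewrite inE | move=> x; rewrite inE => /eqP ->].
have [m' [m's hm]] := IH isT.
exists (minn a m'); split.
  rewrite inE /minn; case: ifP => h.
    by rewrite eqxx.
  by rewrite m's orbT.
move=> x; rewrite inE => /orP [/eqP -> | xs]; first exact: geq_minl.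
exact: leq_trans (geq_minr _ _) (hm x xs).
Qed.

Lemma main n : forall L l m j, size L = n -> uniq L -> {in L, forall x, 0 < w x} ->
  m \in L -> {in L, forall x, m <= x} -> 0 < l -> j <= l ->
  exists s, enum_of (Jp L l m j) s /\ size s = j * fF l L.
Proof.
elim: n => [|n IH] L l m j sL uL wp mL mmin lpos jl.
  by move: mL; rewrite (size0nil sL).
have Aenum : forall L' l', size L' = n -> uniq L' -> {in L', forall x, 0 < w x} ->
    L' != [::] -> 0 < l' ->
    exists s, enum_of (Ap L' l') s /\ size s = l' * fF l' L'.
  move=> L' l' sL' uL' wp' ne lp'.
  have [m' [m'L hm']] := exists_min ne.
  have [s [hs es]] := IH L' l' m' l' sL' uL' wp' m'L hm' lp' (leqnn _).
  exists s; split=> //; apply: enum_ext hs => F; rewrite /Jp.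
  case hA: (Ap L' l' F) => //=; case/and3P: hA => _ hp /eqP hs'.
  by rewrite -hs' take_size (perm_mem hp).
have HQ : forall lam, lam \in L ->
    exists s', enum_of (Q L l m lam) s' /\ size s' = hh L l m lam.
  move=> lam lL.
  have ulr := rem_uniq lam uL.
  have wpr : {in rem lam L, forall x, 0 < w x} by move=> x /mem_rem; apply: wp.
  have szr : size (rem lam L) = n by rewrite size_rem // sL.
  have wl := wp _ lL.
  have lp' : 0 < l + w lam - 1 by lia.
  rewrite /hh; case: (eqVneq lam m) => [E | ne].
    subst lam.
    case: (eqVneq (rem m L) [::]) => [E | ne].
      exists [:: nseq (l + w m - 1) leaf0]; split=> //; split=> // F.
      by rewrite /Q E Ap_nil eqxx andbT inE.
    have [s [hs es]] := Aenum _ _ szr ulr wpr ne lp'.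
    exists s; split=> //; apply: enum_ext hs => F; by rewrite /Q eqxx andbT.
  have mr : m \in rem lam L by rewrite (mem_rem_uniq _ uL) inE mL andbT eq_sym.
  have [s [hs es]] := IH (rem lam L) (l + w lam - 1) m (w lam) szr ulr wpr mr
        (fun x xr => mmin x (mem_rem xr)) lp' (ltac:(lia)).
  exists s; split=> //; apply: enum_ext hs => F; rewrite /Q /Jp.
  by rewrite (negbTE ne).
have [s0 [hs0 es0]] : exists s0, enum_of (Jp L l m 1) s0 /\ size s0 = fF l L.
  have [s [hs es]] := lam_step uL mL mmin wp lpos uL (fun x h => h) HQ.
  exists s; split.
    apply: enum_ext hs => F; case h: (Jp L l m 1 F) => //=.
    exact: Jp_rootin h.
  by rewrite es (sum_hh uL mL wp lpos sL).
exists [seq rotr p F | p <- iota 0 j, F <- s0]; split.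
  exact: rot_step.
by rewrite size_allpairs size_iota es0.
Qed.

End Count.

Lemma tree_size t : size (subtrees t) = 1 + \sum_(v <- subtrees t) ddeg v.
Proof.
apply: (@dtree_rect2 (fun t => size (subtrees t) = 1 + \sum_(v <- subtrees t) ddeg v)
   (fun s => size (fvertices s) = size s + \sum_(v <- fvertices s) ddeg v)).
- move=> l c ch IH /=; rewrite big_cons -[flatten _]/(fvertices ch) IH /ddeg /=.
  by rewrite addnA.
- by rewrite /= big_nil.
- move=> t' s Ht Hs; rewrite fv_cons size_cat big_cat /= Ht Hs.
  lia.
Qed.

Lemma fv_size F : size (fvertices F) = size F + \sum_(v <- fvertices F) ddeg v.
Proof.
elim: F => [|t F IH]; first by rewrite big_nil.
by rewrite fv_cons size_cat big_cat /= tree_size IH; lia.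
Qed.

Lemma Posz_sum (s : seq nat) (F : nat -> nat) :
  Posz (\sum_(x <- s) F x)%N = (\sum_(x <- s) Posz (F x))%R.
Proof. by elim: s => [|a s IH]; rewrite ?big_nil ?big_cons // PoszD IH. Qed.

Lemma sum_group (g v : nat -> nat) (s ds : seq nat) : uniq ds ->
  {in s, forall x, v x \in ds} ->
  \sum_(x <- s) g (v x) = \sum_(d <- ds) g d * count (fun x => v x == d) s.
Proof.
move=> uds; elim: s => [|a s IH] H.
  by rewrite big_nil big1 // => d _; rewrite muln0.
rewrite big_cons IH; last by move=> x xs; apply: H; rewrite inE xs orbT.
have ha : v a \in ds by apply: H; rewrite inE eqxx.
rewrite /= [in RHS](eq_bigr (fun d => g d * (v a == d) + g d * count (fun x => v x == d) s)); last first.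
  by move=> d _; rewrite /= mulnDr.
rewrite big_split /=; congr (_ + _).
rewrite (bigD1_seq (v a)) //= eqxx muln1 big1 ?addn0 // => d /negbTE.
by rewrite eq_sym => ->; rewrite muln0.
Qed.

Lemma prod_group (g v : nat -> nat) (s ds : seq nat) : uniq ds ->
  {in s, forall x, v x \in ds} ->
  \prod_(x <- s) g (v x) = \prod_(d <- ds) g d ^ count (fun x => v x == d) s.
Proof.
move=> uds; elim: s => [|a s IH] H.
  by rewrite big_nil big1 // => d _; rewrite expn0.
rewrite big_cons IH; last by move=> x xs; apply: H; rewrite inE xs orbT.
have ha : v a \in ds by apply: H; rewrite inE eqxx.
rewrite /= [in RHS](eq_bigr (fun d => g d ^ (v a == d) * g d ^ count (fun x => v x == d) s)); last first.
  by move=> d _; rewrite /= expnD.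
rewrite big_split /=; congr (_ * _).
rewrite (bigD1_seq (v a)) //= eqxx expn1 big1 ?muln1 // => d /negbTE.
by rewrite eq_sym => ->; rewrite expn0.
Qed.

Definition wS (r : seq nat) (S : nat -> pred nat) (x : nat) :=
  head 0 [seq i <- iota 1 (size r) | S i x].

Section Final.
Variables (r : seq nat) (k : nat) (S : nat -> pred nat).
Hypothesis hV : inV r S.
Local Notation n := (n_of r).
Local Notation w := (wS r S).

Lemma S_range i x : 1 <= i -> S i x -> (1 <= x <= n) /\ i < size r.
Proof.
case: hV => _ H2 H3 i1 Sx.
have xr : 1 <= x <= n by apply/H2; exists i.
split=> //; rewrite ltnNge; apply/negP => ri.
have := H3 i i1; rewrite /rr nth_default // => /eqP; rewrite -leqn0 leqNgt => /negP; apply.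
rewrite -has_count; apply/hasP; exists x => //; rewrite mem_iota; lia.
Qed.

Lemma wS_spec i x : 1 <= i -> S i x -> w x = i.
Proof.
move=> i1 Sx; have [_ ir] := S_range i1 Sx.
have : i \in [seq j <- iota 1 (size r) | S j x] by rewrite mem_filter Sx mem_iota; lia.
rewrite /wS; case E: [seq j <- iota 1 (size r) | S j x] => [|j fl] //= _.
have : j \in [seq j <- iota 1 (size r) | S j x] by rewrite E inE eqxx.
rewrite mem_filter mem_iota => /andP [Sj /andP [j1 _]].
case: hV => H1 _ _; case: (eqVneq i j) => // ne.
by case: (H1 i j x i1 j1 ne Sx Sj).
Qed.

Lemma wS_ex x : 1 <= x <= n -> [/\ 1 <= w x, S (w x) x & w x < size r].
Proof.
case: hV => _ H2 _ /H2 [i i1 Sx]; rewrite (wS_spec i1 Sx); split=> //.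
by case: (S_range i1 Sx).
Qed.

Lemma wS_eq x i : 1 <= x <= n -> 1 <= i -> (w x == i) = S i x.
Proof.
move=> xr i1; apply/eqP/idP => [<- | Sx]; first by case: (wS_ex xr).
exact: wS_spec.
Qed.

Lemma n_size : 1 <= n -> 1 < size r.
Proof.
rewrite /n_of; case: (ltnP 1 (size r)) => // h.
by rewrite big_geq.
Qed.

Lemma r0_eq : 1 <= n -> (0 < ell_of r)%R ->
  rr r 0 = `|ell_of r|%N + \sum_(x <- iota 1 n) (w x).-1.
Proof.
move=> n1 ell1.
have e1 : \sum_(x <- iota 1 n) (w x).-1 = \sum_(1 <= d < size r) d.-1 * rr r d.
  rewrite (@sum_group predn w _ (index_iota 1 (size r))) ?iota_uniq //; last first.
    move=> x; rewrite mem_iota mem_index_iota => hx.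
    have hx' : 1 <= x <= n by lia.
    have [h1 _ h3] := wS_ex hx'; lia.
  rewrite big_seq [RHS]big_seq; apply: eq_bigr => d; rewrite mem_index_iota => /andP [d1 _].
  case: hV => _ _ H3; rewrite -(H3 d d1); congr (_ * _); apply: eq_in_count => x.
  rewrite mem_iota => hx; apply: wS_eq => //; lia.
rewrite e1; suff H : Posz (rr r 0) = Posz (`|ell_of r|%N + \sum_(1 <= d < size r) d.-1 * rr r d).
  by case: H.
rewrite PoszD gtz0_abs // /ell_of.
have s0 : 0 < size r by have := n_size n1; lia.
rewrite (big_ltn s0).
rewrite Posz_sum.
have -> : (\sum_(1 <= d < size r) ((d%:Z - 1) * (rr r d)%:Z) =
          \sum_(1 <= d < size r) Posz (d.-1 * rr r d))%R.
  rewrite big_seq [RHS]big_seq; apply: eq_bigr => d; rewrite mem_index_iota => /andP [d1 _].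
  by rewrite PoszM; congr (_ * _)%R; rewrite -(prednK d1) /= -addn1 PoszD addrK.
rewrite /= opprD mulN1r opprK.
by rewrite subrK.
Qed.

Lemma w_range x : x \in iota 1 n -> 1 <= w x < size r.
Proof. rewrite mem_iota => hx; have hx' : 1 <= x <= n by lia.
have [h1 _ h3] := wS_ex hx'; lia. Qed.

Lemma count_w d : 1 <= d -> count (fun x => w x == d) (iota 1 n) = rr r d.
Proof.
move=> d1; case: hV => _ _ H3; rewrite -(H3 d d1); apply: eq_in_count => x.
rewrite mem_iota => hx; apply: wS_eq => //; lia.
Qed.

Lemma prod_eq : \prod_(x <- iota 1 n) w x = \prod_(1 <= d < size r) d ^ rr r d.
Proof.
rewrite (@prod_group id w _ (index_iota 1 (size r))) ?iota_uniq //; last first.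
  by move=> x /w_range; rewrite mem_index_iota.
rewrite big_seq [RHS]big_seq; apply: eq_bigr => d; rewrite mem_index_iota => /andP [d1 _].
by rewrite count_w.
Qed.

Section Forest.
Variable F : seq dtree.
Local Notation V := (fvertices F).
Hypotheses (hd : {in filter internal V, forall v, ddeg v = w (dlabel v)})
  (hp : perm_eq (labs F) (iota 1 n)).

Lemma count_int : count internal V = n.
Proof. by rewrite -size_filter -(size_map dlabel) -/(labs F) (perm_size hp) size_iota. Qed.

Lemma count0 : count (fun v => ddeg v == 0) V = size F + \sum_(x <- iota 1 n) (w x).-1.
Proof.
have e1 : \sum_(v <- V) ddeg v = \sum_(x <- iota 1 n) w x.
  rewrite -(perm_big _ hp) /labs big_map big_filter_cond [RHS]big_mkcond /=.
  apply: eq_big_seq => v vV; rewrite andbT; case: ifP => hi; first by rewrite hd // mem_filter hi.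
  by move: hi; rewrite /internal; case: (ddeg v).
have e2 : \sum_(x <- iota 1 n) w x = n + \sum_(x <- iota 1 n) (w x).-1.
  rewrite (_ : \sum_(x <- iota 1 n) w x = \sum_(x <- iota 1 n) (1 + (w x).-1)).
    by rewrite big_split sum_const_seq size_iota muln1.
  rewrite big_seq [RHS]big_seq; apply: eq_bigr => x /w_range; lia.
have e3 : count (fun v => ddeg v == 0) V + count internal V = size V.
  rewrite addnC -(count_predC internal); congr (_ + _); apply: eq_count => v.
  by rewrite /= /internal lt0n negbK.
move: e3; rewrite count_int fv_size e1 e2; lia.
Qed.

Lemma counti i : 1 <= i -> count (fun v => ddeg v == i) V = rr r i.
Proof.
move=> i1; rewrite -count_w //.
have -> : count (fun v => ddeg v == i) V = count (fun v => ddeg v == i) (filter internal V).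
  rewrite count_filter; apply: eq_count => v /=; rewrite /internal.
  by case: eqP => // ->; rewrite i1.
rewrite -(permP hp) /labs count_map; apply: eq_in_count => v vi /=.
by rewrite hd.
Qed.
End Forest.

Lemma CF_Ap F : 1 <= n -> (0 < ell_of r)%R ->
  CF r k S F <-> Ap k w (iota 1 n) `|ell_of r|%N F.
Proof.
move=> n1 ell1; split.
- case=> h1 h2 h3 h4 h5.
  have hd : {in filter internal (fvertices F), forall v, ddeg v = w (dlabel v)}.
    move=> v vi; have := allP h5 v vi; move: vi; rewrite mem_filter => /andP [iv _] Sv.
    by apply/esym/wS_spec.
  have hok : all (okv k w) (fvertices F).
    apply/allP => v vV; rewrite /okv; case: ifP => iv.
      by rewrite hd ?mem_filter ?iv // eqxx /= (allP h4) // mem_filter iv.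
    by have := allP h1 v; rewrite mem_filter iv vV => /(_ isT).
  rewrite /Ap hok h3 /=.
  have := count0 hd h3; rewrite h2 (r0_eq n1 ell1) => /eqP.
  by rewrite eqn_add2r eq_sym.
- case/and3P=> hok hp /eqP hs.
  have hd : {in filter internal (fvertices F), forall v, ddeg v = w (dlabel v)}.
    move=> v; rewrite mem_filter => /andP [iv vV]; move: (allP hok v vV).
    by rewrite /okv iv => /andP [/eqP].
  split=> //.
  + apply/allP => v; rewrite mem_filter => /andP [iv vV]; move: (allP hok v vV).
    by rewrite /okv (negbTE iv).
  + case=> [|i]; last exact: counti.
    by rewrite (count0 hd hp) hs (r0_eq n1 ell1).
  + apply/allP => v; rewrite mem_filter => /andP [iv vV]; move: (allP hok v vV).
    by rewrite /okv iv => /andP [_].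
  + apply/allP => v vi; rewrite hd //.
    have : dlabel v \in iota 1 n by rewrite -(perm_mem hp); apply: map_f.
    rewrite mem_iota => hx; have hx' : 1 <= dlabel v <= n by lia.
    by case: (wS_ex hx').
Qed.

End Final.

Lemma enum_has_card (P : seq dtree -> Prop) (Pb : pred (seq dtree)) s :
  (forall x, P x <-> Pb x) -> enum_of Pb s -> has_card P (size s).
Proof.
move=> E [us hs]; exists (fun i : 'I_(size s) => nth [::] s i); split.
  move=> i j /eqP; rewrite nth_uniq // => /eqP h; exact: val_inj.
move=> x; rewrite E hs; split.
  by case/(nthP [::]) => i ilt <-; exists (Ordinal ilt).
by case=> i <-; apply: mem_nth.
Qed.

Local Open Scope ring_scope.

Theorem theorem3p5 (r : seq nat) (k : nat) (S : nat -> pred nat) :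
  (1 <= n_of r)%N -> 1 <= ell_of r -> inV r S ->
  exists N : nat, has_card (CF r k S) N /\
    (N%:Z = ell_of r * (\prod_(1 <= d < size r) d ^ rr r d)%N%:Z
                     * (\prod_(1 <= i < n_of r) (rr r 0 + i * k.+1))%N%:Z).
Proof.
move=> n1 ell1 hV.
have ell0 : 0 < ell_of r by lia.
set lN := `|ell_of r|%N.
have lpos : (0 < lN)%N by rewrite /lN; lia.
set L := iota 1 (n_of r).
have wp : {in L, forall x, (0 < wS r S x)%N}.
  by move=> x /(w_range hV) /andP [].
have mL : (1 \in L)%N by rewrite mem_iota; lia.
have mmin : {in L, forall x, (1 <= x)%N} by move=> x; rewrite mem_iota => /andP [].
have [s [hs es]] := main k (size_iota 1 (n_of r)) (iota_uniq 1 (n_of r)) wp mL mmin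
   lpos (leqnn lN).
exists (size s); split.
  apply: (enum_has_card (Pb := Jp k (wS r S) L lN 1 lN)) hs => F.
  rewrite (@CF_Ap r k S hV F n1 ell0) /Jp.
  split => [h | /andP [] //]; rewrite h /=.
  case/and3P: h => _ hp /eqP hsz; rewrite /lN -hsz take_size (perm_mem hp) //.
rewrite es /fF size_iota.
have -> : (\prod_(1 <= i < n_of r) (lN + \sum_(x <- L) (wS r S x).-1 + i * k.+1))%N =
          (\prod_(1 <= i < n_of r) (rr r 0 + i * k.+1))%N.
  by rewrite (r0_eq hV n1 ell0).
rewrite (prod_eq hV) !PoszM mulrA.
by rewrite gtz0_abs.
Qed.
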